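(* Let $G$ be a finite simple connected graph of order at least $2$ having a minimum dominating set $D$ with $c(D)\neq \emptyset$. Then the Cartesian product $G \,\square\, H$ is not well-dominated for every finite simple connected graph $H$ of order at least $2$.
   Context: For $u\in A\subseteq V(G)$, $\mathrm{pn}[u,A]=\{x\in V(G): N[x]\cap A=\{u\}\}$; for a dominating set $D$, $c(D)=\{x\in D : \mathrm{pn}[x,D]=\{x\}\}$. A graph is well-dominated if every minimal (with respect to inclusion) dominating set is a minimum dominating set. The Cartesian product $G\,\square\, H$ has vertex set $V(G)\times V(H)$, with $(g_1,h_1)$ adjacent to $(g_2,h_2)$ iff either ($g_1=g_2$ and $h_1h_2\in E(H)$) or ($h_1=h_2$ and $g_1g_2\in E(G)$). *)

(* Defs.v *)
From mathcomp Require Import all_boot.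
Set Implicit Arguments. Unset Strict Implicit. Unset Printing Implicit Defensive.

Section Graphs.
Variable T : finType.
Variable e : rel T.

Definition simple_graph : Prop := symmetric e /\ irreflexive e.

Definition connected_graph : Prop := forall x y : T, connect e x y.

Definition cnbhd (x : T) : {set T} := [set y | (y == x) || e x y].

Definition dominating (D : {set T}) : Prop :=
  forall x : T, cnbhd x :&: D != set0.

Definition minimal_dominating (D : {set T}) : Prop :=
  dominating D /\ forall D' : {set T}, D' \proper D -> ~ dominating D'.

Definition minimum_dominating (D : {set T}) : Prop :=
  dominating D /\ forall D' : {set T}, dominating D' -> #|D| <= #|D'|.

Definition well_dominated : Prop :=
  forall D : {set T}, minimal_dominating D -> minimum_dominating D.

Definition pn (u : T) (A : {set T}) : {set T} :=
  [set x | cnbhd x :&: A == [set u]].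

Definition cD (D : {set T}) : {set T} :=
  [set x in D | pn x D == [set x]].
End Graphs.

Definition cartprod (T U : finType) (e : rel T) (f : rel U) : rel (T * U) :=
  fun p q => ((p.1 == q.1) && f p.2 q.2) || ((p.2 == q.2) && e p.1 q.1).

(* Main.v *)
Require Import Defs.
From mathcomp Require Import all_boot.
From mathcomp Require Import zify.

Set Implicit Arguments. Unset Strict Implicit. Unset Printing Implicit Defensive.

Lemma nbr_exists (T : finType) (e : rel T) :
  connected_graph e -> 1 < #|T| -> forall v, exists w, e v w.
Proof.
move=> conn h2 v.
have : [set~ v] != set0.
  by rewrite -card_gt0 cardsC1; lia.
case/set0Pn => y; rewrite !inE => hy.
case/connectP: (conn v y) => [[|a p]] /=.
  by move=> _ hyv; rewrite hyv eqxx in hy.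
by case/andP=> hva _ _; exists a.
Qed.

Lemma other_elt (T : finType) (A : {set T}) v :
  A != [set v] -> v \in A -> exists z, z \in A /\ z != v.
Proof.
move=> hA vA.
case: (boolP [exists z, (z \in A) && (z != v)]) => [/existsP [z /andP [? ?]] | h].
  by exists z.
exfalso; move/eqP: hA; apply; apply/setP => z; rewrite inE.
apply/idP/idP => [zA|/eqP->//].
move/existsPn: h => /(_ z); by rewrite zA /= negbK.
Qed.

Section Swap.
Variables (T : finType) (e : rel T).
Hypotheses (sym : symmetric e) (irr : irreflexive e).
Hypothesis nbr : forall v, exists w, e v w.

Definition cnt (P : {set T}) := #|[set p in P | [exists q in P, e p q]]|.
Definition epn (P : {set T}) := forall p, p \in P ->
  exists w, w \notin P /\ cnbhd e w :&: P = [set p].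

Lemma swap_step P v : dominating e P ->
  (forall D', dominating e D' -> #|P| <= #|D'|) -> v \in P ->
  (forall w, w \notin P -> cnbhd e w :&: P != [set v]) ->
  exists P', [/\ dominating e P', #|P'| = #|P| & cnt P < cnt P'].
Proof.
move=> hd hmin vP hno.
have hv : cnbhd e v :&: P = [set v].
  have nd : ~ dominating e (P :\ v).
    move=> hd'; have := hmin _ hd'.
    by rewrite (cardsD1 v P) vP add1n ltnn.
  case: (boolP [exists u, cnbhd e u :&: (P :\ v) == set0]) =>
     [/existsP [u /eqP hu] | hne]; last first.
    exfalso; apply: nd => u; move: hne; rewrite negb_exists => /forallP /(_ u).
    done.
  case/set0Pn: (hd u) => z; rewrite inE => /andP [zu zP].
  have zv : z = v.
    apply/eqP; apply/negPn/negP => znv.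
    have : z \in cnbhd e u :&: (P :\ v) by rewrite in_setI in_setD1 zu znv zP.
    by rewrite hu inE.
  subst z.
  have hu' : cnbhd e u :&: P = [set v].
    apply/setP => y; rewrite inE.
    apply/idP/idP => [yA|/eqP->]; last by rewrite in_setI zu vP.
    apply/negPn/negP => ynv.
    have : y \in cnbhd e u :&: (P :\ v).
      by move: yA; rewrite !inE ynv => /andP [-> ->].
    by rewrite hu inE.
  case: (boolP (u \in P)) => uP; last by move: (hno u uP); rewrite hu' eqxx.
  have : u \in cnbhd e u :&: P by rewrite !inE eqxx uP.
  by rewrite hu' inE => /eqP uv; subst u.
have memv : forall y, y \in P -> (y == v) || e v y -> y = v.
  move=> y yP hy; have : y \in cnbhd e v :&: P by rewrite !inE hy yP.
  by rewrite hv inE => /eqP.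
case: (nbr v) => w evw.
have wP : w \notin P.
  apply/negP => wP; have := memv w wP; rewrite evw orbT => /(_ isT) wv.
  by subst w; rewrite irr in evw.
exists (w |: (P :\ v)); split.
- move=> y; case/set0Pn: (hd y) => z; rewrite in_setI => /andP [zy zP].
  apply/set0Pn.
  case: (eqVneq z v) => [zv|znv]; last by exists z; rewrite in_setI in_setU1 in_setD1 zy znv zP orbT.
  subst z.
  case: (eqVneq y v) => [->|ynv].
    by exists w; rewrite !inE eqxx evw orbT.
  case: (boolP (y \in P)) => yP.
    by exists y; rewrite !inE eqxx ynv yP orbT.
  have vin : v \in cnbhd e y :&: P by rewrite in_setI zy vP.
  have [z [zA znv]] := other_elt (hno y yP) vin.
  by exists z; move: zA; rewrite !inE znv => /andP [-> ->]; rewrite orbT.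
- rewrite cardsU1 !inE (negbTE wP) andbF /= (cardsD1 v P) vP.
  by rewrite add1n.
- rewrite /cnt.
  set A := [set p in P | _].
  set A' := [set p in _ | _].
  have wA : w \notin A by rewrite inE (negbTE wP).
  have sub : w |: A \subset A'.
    apply/subsetP => p; rewrite !inE => /orP [/eqP -> | /andP [pP /existsP [q /andP [qP epq]]]].
      rewrite eqxx /=.
      have vin : v \in cnbhd e w :&: P by rewrite !inE sym evw orbT vP.
      have [q [qA qnv]] := other_elt (hno w wP) vin.
      move: qA; rewrite !inE => /andP [/orP [/eqP qw|ewq] qP].
        by subst q; rewrite qP in wP.
      by apply/existsP; exists q; rewrite !inE qnv qP ewq orbT.
    have pnv : p != v.
      apply/negP => /eqP pv; subst p.
      have := memv q qP; rewrite epq orbT => /(_ isT) qv; subst q.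
      by rewrite irr in epq.
    have qnv : q != v.
      apply/negP => /eqP qv; subst q.
      have := memv p pP; rewrite -sym epq orbT => /(_ isT) pv; subst p.
      by rewrite irr in epq.
    rewrite pnv pP orbT /=.
    by apply/existsP; exists q; rewrite !inE qnv qP epq orbT.
  have := subset_leq_card sub; rewrite cardsU1 wA.
  by rewrite add1n.
Qed.

Lemma get_epn n P : #|T| - cnt P <= n -> dominating e P ->
  (forall D', dominating e D' -> #|P| <= #|D'|) ->
  exists Q, [/\ dominating e Q, #|Q| = #|P| & epn Q].
Proof.
elim: n P => [|n IH] P hn hd hmin;
 (case: (boolP [forall p in P, [exists w, (w \notin P) && (cnbhd e w :&: P == [set p])]]) => hb;
  [exists P; split => // p pP; move/forall_inP: hb => /(_ p pP) /existsP [w /andP [wP /eqP hw]];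
   by exists w | ]);
 (move: hb; rewrite negb_forall_in => /existsP [v /andP [vP hv]];
  have hno : forall w, w \notin P -> cnbhd e w :&: P != [set v] by
    move=> w wP; move/existsPn: hv => /(_ w); rewrite wP);
 have [P' [hd' hs hc]] := swap_step hd hmin vP hno.
- have : cnt P' <= #|T| by apply: max_card.
  lia.
- have [Q [hQ hQs hQe]] := IH P' ltac:(lia) hd' ltac:(by rewrite hs).
  by exists Q; split => //; rewrite hQs.
Qed.

End Swap.

Theorem proposition18 (T : finType) (e : rel T) :
  simple_graph e -> connected_graph e -> 1 < #|T| ->
  (exists D : {set T}, minimum_dominating e D /\ cD e D != set0) ->
  forall (U : finType) (f : rel U),
    simple_graph f -> connected_graph f -> 1 < #|U| ->
    ~ well_dominated (cartprod e f).
Proof.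
move=> [sym irr] conn hT [D [[hdD hminD] hc]] U f [symf irrf] connf hU hwd.
have nbre := nbr_exists conn hT.
have nbrf := nbr_exists connf hU.
case/set0Pn: hc => x; rewrite inE => /andP [xD /eqP hpn].
have [Q [hdQ hQs hQe]] := get_epn sym irr nbre (leqnn _) hdD hminD.
have [h0 _] : exists h0 : U, h0 \in U.
  by apply/card_gt0P; exact: ltnW hU.
have [h1 fh01] := nbrf h0.
set S1 := setX Q [set: U].
set S0 := setX D [set: U] :\ (x, h0).
have m1 : minimal_dominating (cartprod e f) S1.
  split.
    move=> [v h]; case/set0Pn: (hdQ v) => z; rewrite !inE => /andP [zv zQ].
    apply/set0Pn; exists (z, h); rewrite !inE /cartprod /= zQ /= eqxx /=.
    case/orP: zv => [/eqP->|evz]; first by rewrite eqxx.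
    by rewrite evz !orbT.
  move=> D' /properP [sub [[p h] pS pD']] hdD'.
  move: pS; rewrite in_setX => /andP [pQ _].
  have [w [wQ hw]] := hQe p pQ.
  case/set0Pn: (hdD' (w, h)) => [[q1 q2]]; rewrite inE => /andP [qn qD'].
  have := subsetP sub _ qD'; rewrite in_setX => /andP [q1Q _].
  move: qn; rewrite inE /cartprod /= xpair_eqE.
  case/orP => [/andP [/eqP e1 _] | /orP [/andP [/eqP e1 _] | /andP [/eqP e2 ewq]]].
  - by move: wQ; rewrite -e1 q1Q.
  - by move: wQ; rewrite e1 q1Q.
  - have : q1 \in cnbhd e w :&: Q by rewrite !inE ewq orbT q1Q.
    rewrite hw inE => /eqP q1p.
    by move: qD'; rewrite q1p -e2 (negbTE pD').
have d0 : dominating (cartprod e f) S0.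
  move=> [v h]; case/set0Pn: (hdD v) => z; rewrite !inE => /andP [zv zD].
  apply/set0Pn.
  case: (eqVneq (z, h) (x, h0)) => [E|ne].
    case: E => zx hh; subst z h.
    case: (eqVneq v x) => [vx|vnx].
      subst v; exists (x, h1).
      rewrite !inE /cartprod /= !xpair_eqE !eqxx fh01 xD /= andbT.
      rewrite orbT /=; apply/negP => /eqP h10; move: fh01; by rewrite h10 irrf.
    have exv : e v x by move: zv; rewrite eq_sym (negbTE vnx).
    have : v \notin pn e x D by rewrite hpn inE.
    rewrite inE => hne.
    have xin : x \in cnbhd e v :&: D by rewrite !inE exv orbT.
    have [d [dA dnx]] := other_elt hne xin.
    move: dA; rewrite !inE => /andP [dv dD].
    exists (d, h0); rewrite !inE /cartprod /= !xpair_eqE !eqxx !andbT (negbTE dnx) dD /= andbT.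
    by case/orP: dv => [/eqP->|evd]; rewrite ?eqxx ?evd ?orbT.
  exists (z, h); rewrite !inE /cartprod /= ne zD /= eqxx /=.
  case/orP: zv => [/eqP->|evz]; first by rewrite eqxx.
  by rewrite evz !orbT.
have hle := (hwd _ m1).2 _ d0.
have e1 : #|S1| = #|D| * #|U| by rewrite cardsX cardsT hQs.
have e2 := cardsD1 (x, h0) (setX D [set: U]).
rewrite in_setX xD inE /= cardsX cardsT in e2.
rewrite -/S0 in e2.
by move: hle; rewrite e1 e2 add1n ltnn.
Qed.
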